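(* Let $I \subseteq A = \mathbbm{k}[X_1,\dots,X_r]$ be a monomial ideal and let $\mathbf{a} \in \mathbb{N}^r$. Let $p, q \in \mathbb{N}$ with $q \neq 0$. Then $x^{\mathbf{a}} \in I_{p/q}$ if and only if $\nu^*_{\mathbf{a}}(I) \ge \frac{p}{q}$.
   Context: $\mathbbm{k}$ is a field. For an ideal $I$ in a domain $A$ and a positive rational $u = p/q$ ($p,q\in\mathbb{N}$, $q\neq 0$), the $u$-th rational power is $I_u = \{x \in A : x^q \in \overline{I^p}\}$, where $\overline{\,\cdot\,}$ denotes integral closure; this does not depend on the representation of $u$. For a monomial ideal $I$ with minimal monomial generators whose exponent vectors form the columns of the $r\times m$ matrix $M$ (the exponent matrix of $I$), and $\mathbf{a}\in\mathbb{N}^r$, $\nu^*_{\mathbf{a}}(I)$ denotes the optimal value of the linear program: maximize $\mathbf{1}^m\cdot \mathbf{y}$ subject to $M\mathbf{y} \le \mathbf{a}$, $\mathbf{y}\in\mathbb{R}^m_{\ge 0}$ (equivalently, by LP duality, the minimum of $\mathbf{a}\cdot\mathbf{z}$ subject to $M^T\mathbf{z}\ge \mathbf{1}^m$, $\mathbf{z}\in\mathbb{R}^r_{\ge0}$). $x^{\mathbf a}$ denotes the monomial with exponent vector $\mathbf a$. *)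

(* Defs.v *)
From mathcomp Require Import all_boot all_algebra.
From mathcomp Require Import mpoly.
From mathcomp Require Import boolp classical_sets reals constructive_ereal ereal.

Set Implicit Arguments.
Unset Strict Implicit.
Unset Printing Implicit Defensive.

Import GRing.Theory Num.Theory.
Local Open Scope ring_scope.

Section IdealDefs.
Variable A : comNzRingType.

Definition ideal_span (S : A -> Prop) : A -> Prop :=
  fun f => exists (n : nat) (c g : 'I_n -> A),
      (forall i, S (g i)) /\ f = \sum_(i < n) c i * g i.

Fixpoint ideal_pow (J : A -> Prop) (n : nat) : A -> Prop :=
  match n with
  | 0 => ideal_span (fun g => g = 1)
  | n'.+1 => ideal_span (fun g => exists u v, J u /\ ideal_pow J n' v /\ g = u * v)
  end.

(* Integral closure of an ideal J: x satisfies an equation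
   x^n + c_1 x^(n-1) + ... + c_n = 0 with n >= 1 and c_j in J^j.
   Here c i stands for c_(i+1). *)
Definition integral_closure (J : A -> Prop) : A -> Prop :=
  fun x => exists (n : nat) (c : 'I_n -> A),
      (0 < n)%N /\ (forall i : 'I_n, ideal_pow J i.+1 (c i)) /\
      x ^+ n + \sum_(i < n) c i * x ^+ (n - i.+1) = 0.

Definition rational_power (I : A -> Prop) (p q : nat) : A -> Prop :=
  fun x => integral_closure (ideal_pow I p) (x ^+ q).

End IdealDefs.

Definition is_min_monomial_gens (k : fieldType) (r : nat)
    (I : {mpoly k[r]} -> Prop) (gens : seq 'X_{1..r}) : Prop :=
  [/\ (forall f, I f <-> ideal_span (fun g => exists2 m, m \in gens & g = 'X_[m]) f),
      uniq gens &
      (forall m1 m2, m1 \in gens -> m2 \in gens -> (m1 <= m2)%MM -> m1 = m2)].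

(* Feasible region of the LP: y >= 0, M y <= a, where column i of M is the
   exponent vector gens_i. *)
Definition lp_feasible (R : realType) (r : nat) (gens : seq 'X_{1..r})
    (a : 'X_{1..r}) (y : 'I_(size gens) -> R) : Prop :=
  (forall i, 0 <= y i) /\
  (forall j : 'I_r,
      \sum_(i < size gens) ((tnth (in_tuple gens) i) j)%:R * y i <= (a j)%:R).

Definition nu_star (R : realType) (r : nat) (gens : seq 'X_{1..r})
    (a : 'X_{1..r}) : \bar R :=
  ereal_sup [set (\sum_(i < size gens) y i)%:E | y in @lp_feasible R r gens a].

(* Main.v *)
Require Import Defs.
From mathcomp Require Import all_boot all_algebra.
From mathcomp Require Import mpoly.
From mathcomp Require Import boolp classical_sets reals constructive_ereal ereal.
From mathcomp Require Import all_order zify ring lra.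
Import Order.TTheory GRing.Theory Num.Theory.
Local Open Scope ring_scope.

Section Ideals.
Variable A : comNzRingType.

Lemma span_gen (S : A -> Prop) c g : S g -> ideal_span S (c * g).
Proof.
move=> Sg; exists 1%N, (fun _ => c), (fun _ => g); split => //.
by rewrite big_ord1.
Qed.

Lemma span0 (S : A -> Prop) : ideal_span S 0.
Proof.
by exists 0%N, (fun _ => 0), (fun _ => 0); split=> [[]//|]; rewrite big_ord0.
Qed.

Lemma spanN (S : A -> Prop) f : ideal_span S f -> ideal_span S (- f).
Proof.
case=> n [c [g [Sg ->]]]; exists n, (fun i => - c i), g; split => //.
by rewrite -sumrN; apply: eq_bigr => i _; rewrite mulNr.
Qed.

Lemma powN (J : A -> Prop) n f : ideal_pow J n f -> ideal_pow J n (- f).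
Proof. by case: n => [|n]; apply: spanN. Qed.

End Ideals.

Lemma sub_multiset m (z : 'I_m -> nat) K :
  (K <= \sum_i z i)%N -> exists z' : 'I_m -> nat,
    (forall i, z' i <= z i)%N /\ \sum_i z' i = K.
Proof.
elim: K => [|K IH] hK.
  by exists (fun _ => 0%N); split=> // ; rewrite big1.
have [z' [le_z' sz']] := IH (ltnW hK).
case: (boolP [exists i, z' i < z i]%N) => [/existsP [i0 lt0]|/existsPn H]; last first.
  have : (\sum_i z i <= \sum_i z' i)%N.
    by apply: leq_sum => i _; move: (H i); rewrite -leqNgt.
  by rewrite sz' leqNgt hK.
exists (fun i => if i == i0 then (z' i).+1 else z' i); split.
  by move=> i; case: eqP => [->//|]; rewrite le_z'.
rewrite (bigD1 i0) //= eqxx (eq_bigr (fun i => z' i)); last first.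
  by move=> i /negPf ->.
by rewrite -sz' (bigD1 i0 (P:=xpredT)) //= addSn.
Qed.

Section Mono.
Variables (k : fieldType) (r : nat) (gens : seq 'X_{1..r}).
Local Notation m := (size gens).
Local Notation g i := (tnth (in_tuple gens) i).
Local Notation P := {mpoly k[r]}.

Definition reach (K : nat) (b : 'X_{1..r}) :=
  exists z : 'I_m -> nat, (K <= \sum_i z i)%N /\
    forall j, (\sum_i z i * g i j <= b j)%N.

Lemma reach0 b : reach 0 b.
Proof. by exists (fun _ => 0%N); split=> // j; rewrite big1. Qed.

Lemma reach_up K (b b' : 'X_{1..r}) : reach K b -> (forall j, b j <= b' j)%N -> reach K b'.
Proof. by case=> z [h1 h2] hb; exists z; split=> // j; apply: leq_trans (h2 j) (hb j). Qed.

Lemma reach_add K1 K2 b1 b2 : reach K1 b1 -> reach K2 b2 ->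
  reach (K1 + K2) (b1 + b2)%MM.
Proof.
case=> z1 [h1 h1'] [z2 [h2 h2']]; exists (fun i => z1 i + z2 i)%N; split.
  by rewrite big_split /= leq_add.
move=> j; rewrite mnmDE (eq_bigr (fun i => z1 i * g i j + z2 i * g i j)%N).
  by rewrite big_split /= leq_add.
by move=> i _; rewrite mulnDl.
Qed.

Lemma supp_span (S : P -> Prop) (Q : 'X_{1..r} -> Prop) :
  (forall b b', Q b -> Q (b' + b)%MM) ->
  (forall f, S f -> forall b, b \in msupp f -> Q b) ->
  forall f, ideal_span S f -> forall b, b \in msupp f -> Q b.
Proof.
move=> Qup HS f [n [c [gg [Sg ->]]]] b /msupp_sum_le /flatten_mapP [i _].
move=> /msuppM_le /allpairsP [[b1 b2] /= [_ hb2 ->]].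
exact/Qup/(HS _ (Sg i)).
Qed.

Lemma pow_reach (J : P -> Prop) K :
  (forall f, J f -> forall b, b \in msupp f -> reach K b) ->
  forall n f, ideal_pow J n f -> forall b, b \in msupp f -> reach (K * n) b.
Proof.
move=> HJ; elim=> [|n IH] f /=.
  by move=> _ b _; rewrite muln0; apply: reach0.
apply: supp_span.
  move=> b b' hb; apply: reach_up hb _ => j; rewrite mnmDE; exact: leq_addl.
move=> _ [u [v [Ju [Jv ->]]]] b /msuppM_le /allpairsP [[b1 b2] /= [h1 h2 ->]].
by rewrite mulnS; apply: reach_add; [apply: HJ Ju _ _|apply: IH Jv _ _].
Qed.

Variable I : P -> Prop.
Hypothesis hI : forall f,
  I f <-> ideal_span (fun g => exists2 m, m \in gens & g = 'X_[m]) f.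

Lemma I_reach f : I f -> forall b, b \in msupp f -> reach 1 b.
Proof.
move=> /hI; apply: supp_span.
  move=> b b' hb; apply: reach_up hb _ => j; rewrite mnmDE; exact: leq_addl.
move=> _ [mm mem ->] b; rewrite msuppX mem_seq1 => /eqP ->.
have im : (index mm gens < m)%N by rewrite index_mem.
pose i0 := Ordinal im : 'I_m.
exists (fun i => (i == i0 : nat)); split.
  by rewrite (bigD1 i0) //= eqxx.
move=> j; rewrite (bigD1 i0) //= eqxx mul1n big1 ?addn0.
  by rewrite (tnth_nth mm) /= nth_index.
by move=> i /negPf ->.
Qed.

Lemma reach_mem (J : P -> Prop) K :
  (forall b, reach K b -> J 'X_[b]) ->
  forall N b, reach (K * N) b -> ideal_pow J N 'X_[b].
Proof.
move=> HJ; elim=> [|N IH] b hb /=.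
  by rewrite -(mulr1 'X_[b]); apply: span_gen.
case: hb => z [hz hzb].
have [z' [lez' sz']] := @sub_multiset _ _ K (leq_trans (leq_pmulr K (ltn0Sn N)) hz).
pose z2 i := (z i - z' i)%N.
have ez i : z i = (z' i + z2 i)%N by rewrite subnKC.
pose c := [multinom (\sum_i z' i * g i j)%N | j < r].
have lecb : (c <= b)%MM.
  apply/mnm_lepP => j; rewrite mnmE; apply: leq_trans (hzb j).
  by apply: leq_sum => i _; rewrite leq_mul2r lez' orbT.
rewrite -(submK lecb) mpolyXD -[_ * _]mul1r; apply: span_gen.
exists 'X_[c], 'X_[b - c]; split; last split; last by rewrite mulrC.
  apply: HJ; exists z'; split; first by rewrite sz'.
  by move=> j; rewrite mnmE.
apply: IH; exists z2; split.
  move: hz; rewrite (eq_bigr _ (fun i _ => ez i)) big_split /= sz' mulnS.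
  by rewrite leq_add2l.
move=> j; rewrite mnmBE mnmE; move: (hzb j).
rewrite (eq_bigr (fun i => z' i * g i j + z2 i * g i j)%N) ?big_split /=.
  by move=> h; rewrite leq_subRL // (leq_trans _ h) // leq_addr.
by move=> i _; rewrite ez mulnDl.
Qed.

Lemma reach_I b : reach 1 b -> I 'X_[b].
Proof.
case=> z [hz hzb].
case: (boolP [exists i, 0 < z i]%N) => [/existsP [i0 lt0]|/existsPn H]; last first.
  by move: hz; rewrite big1 // => i _; move: (H i); rewrite lt0n negbK => /eqP.
have le : (g i0 <= b)%MM.
  apply/mnm_lepP => j; apply: leq_trans (hzb j).
  rewrite (bigD1 i0) //=; apply: leq_trans (leq_addr _ _).
  by rewrite leq_pmull.
apply/hI; rewrite -(submK le) mpolyXD; apply: span_gen.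
by exists (g i0) => //; apply: mem_tnth.
Qed.

Lemma reach_Ip p b : reach p b -> ideal_pow I p 'X_[b].
Proof. by move=> h; rewrite -(mul1n p) in h; exact: (@reach_mem I 1 reach_I p b h). Qed.

Lemma reach_Ipow p N b :
  reach (p * N) b -> ideal_pow (ideal_pow I p) N 'X_[b].
Proof. exact/reach_mem/reach_Ip. Qed.

Lemma Ipow_reach p N f : ideal_pow (ideal_pow I p) N f ->
  forall b, b \in msupp f -> reach (p * N) b.
Proof.
apply: pow_reach => f' hf' b hb.
by have := @pow_reach I 1 I_reach p f' hf' b hb; rewrite mul1n.
Qed.

Lemma mulmnM (b : 'X_{1..r}) x y : ((b *+ x) *+ y = b *+ (x * y))%MM.
Proof. by apply/mnmP => j; rewrite !mulmnE mulnA. Qed.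

Lemma rp_iff p q a :
  rational_power I p q 'X_[a] <-> exists2 N, (0 < N)%N & reach (p * N) (a *+ (q * N))%MM.
Proof.
rewrite /rational_power mpolyXn; set w := (a *+ q)%MM; split.
  case=> n [c [n0 [hc heq]]].
  have : (('X_[w] ^+ n + \sum_(i < n) c i * 'X_[w] ^+ (n - i.+1)) @_ (w *+ n)%MM = 0 :> k).
    by rewrite heq mcoeff0.
  rewrite mcoeffD mpolyXn mcoeffX eqxx raddf_sum /=.
  have e i : (i < n)%N -> (w *+ n = w *+ (n - i.+1) + w *+ i.+1)%MM.
    by move=> lt; apply/mnmP => j; rewrite mnmDE !mulmnE -mulnDr subnK.
  rewrite (eq_bigr (fun i : 'I_n => (c i)@_(w *+ i.+1)%MM)); last first.
    by move=> i _; rewrite mpolyXn (e i (ltn_ord i)) mcoeffMX.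
  case: (boolP [exists i : 'I_n, (c i)@_(w *+ i.+1)%MM != 0]).
    case/existsP => i hi _; exists i.+1 => //.
    rewrite -mulmnM; apply: (@Ipow_reach p i.+1 (c i) (hc i)); by rewrite mcoeff_msupp.
  move/existsPn => H; rewrite big1 ?addr0; first by move/eqP; rewrite oner_eq0.
  by move=> i _; apply/eqP; rewrite -[_ == _]negbK H.
case=> N N0 hr; exists N, (fun i : 'I_N => if (i.+1 == N)%N then - 'X_[w] ^+ N else 0).
split=> //; split.
  move=> i; case: eqP => [e|_].
    rewrite e; apply: powN; rewrite mpolyXn mulmnM; exact: reach_Ipow.
  by case: (i.+1) => [|?]; apply: span0.
case: N N0 hr => // N _ _.
rewrite big_ord_recr /= eqxx subnn expr0 mulr1 big1 ?add0r ?subrr //.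
by move=> i _; rewrite ltn_eqF ?mul0r // ltnS.
Qed.

End Mono.

Lemma nu_ge (R : realType) r (gens : seq 'X_{1..r}) p q a N :
  (0 < N)%N -> (q != 0)%N -> @reach r gens (p * N) (a *+ (q * N))%MM ->
  ((p%:R / q%:R : R)%:E <= nu_star R gens a)%E.
Proof.
move=> N0 q0 [z [hz hzb]].
set D : R := (q * N)%:R.
have D0 : 0 < D by rewrite ltr0n muln_gt0 lt0n q0.
pose y i := (z i)%:R / D.
have ey : \sum_i y i = (\sum_i z i)%:R / D by rewrite natr_sum mulr_suml.
apply: (@le_trans _ _ (\sum_i y i)%:E); last first.
  apply: ereal_sup_ubound; exists y => //; split.
    by move=> i; rewrite /y divr_ge0 // ler0n.
  move=> j; rewrite (eq_bigr (fun i => (z i * (tnth (in_tuple gens) i) j)%:R / D)); last first.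
    by move=> i _; rewrite /y natrM mulrA [X in X / D]mulrC.
  rewrite -mulr_suml -natr_sum ler_pdivrMr // -natrM ler_nat.
  by move: (hzb j); rewrite mulmnE.
rewrite lee_fin ey.
have -> : (p%:R / q%:R : R) = (p * N)%:R / D.
  rewrite /D !natrM; field.
  by rewrite !pnatr_eq0 -!lt0n N0 lt0n q0.
by rewrite ler_wpM2r ?invr_ge0 ?ler0n // ler_nat.
Qed.
Set Implicit Arguments.
Unset Strict Implicit.
Unset Printing Implicit Defensive.

Definition cstr n := ({ffun 'I_n -> rat} * rat)%type.
Definition tailc n (c : {ffun 'I_n.+1 -> rat}) : {ffun 'I_n -> rat} :=
  [ffun i => c (lift ord0 i)].
Definition comb n (P N : cstr n.+1) : cstr n :=
  ([ffun i => - N.1 ord0 * P.1 (lift ord0 i) + P.1 ord0 * N.1 (lift ord0 i)],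
   - N.1 ord0 * P.2 + P.1 ord0 * N.2).
Definition FM n (S : seq (cstr n.+1)) : seq (cstr n) :=
  [seq ((@tailc n cd.1, cd.2) : cstr n) | cd : cstr n.+1 <- S & cd.1 ord0 == 0] ++
  [seq @comb n P N | P : cstr n.+1 <- [seq cd <- S | 0 < (cd : cstr n.+1).1 ord0],
                  N : cstr n.+1 <- [seq cd <- S | (cd : cstr n.+1).1 ord0 < 0]].
Fixpoint FMn k : seq (cstr k.+1) -> seq (cstr 1) :=
  match k with 0 => id | k'.+1 => fun S => @FMn k' (FM S) end.

Section Sat.
Variable F : realFieldType.
Definition dot n (c : {ffun 'I_n -> rat}) (v : 'I_n -> F) :=
  \sum_i ratr (c i) * v i.
Definition satc n (cd : cstr n) v := dot cd.1 v <= ratr cd.2.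
Definition sat n (S : seq (cstr n)) v := all (fun cd => satc cd v) S.
Definition vcons n (x : F) (v : 'I_n -> F) : 'I_n.+1 -> F :=
  fun i => if unlift ord0 i is Some j then v j else x.

Lemma dot_cons n c x (v : 'I_n -> F) :
  dot c (vcons x v) = ratr (c ord0) * x + dot (tailc c) v.
Proof.
rewrite /dot big_ord_recl /vcons unlift_none; congr (_ + _).
by apply: eq_bigr => i _; rewrite liftK ffunE.
Qed.

Lemma sat_ext n S (v1 v2 : 'I_n -> F) : v1 =1 v2 -> sat S v1 = sat S v2.
Proof.
move=> e; apply: eq_all => cd; rewrite /satc /dot.
by rewrite (eq_bigr (fun i => ratr (cd.1 i) * v2 i)) // => i _; rewrite e.
Qed.

Lemma interval (Ls Us : seq F) :
  (forall l u, l \in Ls -> u \in Us -> l <= u) ->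
  exists x, (forall l, l \in Ls -> l <= x) /\ (forall u, u \in Us -> x <= u).
Proof.
elim: Ls => [|l0 Ls IH] H.
  elim: Us {H} => [|u0 Us IH]; first by exists 0.
  case: IH => x [_ hx]; exists (Num.min u0 x); split=> // u.
  rewrite inE => /orP [/eqP ->|/hx hu]; first by rewrite ge_min lexx.
  by rewrite ge_min hu orbT.
case: IH => [l u hl hu|x [hl hu]]; first by apply: H => //; rewrite inE hl orbT.
exists (Num.max l0 x); split.
  move=> l; rewrite inE => /orP [/eqP ->|/hl h]; first by rewrite le_max lexx.
  by rewrite le_max h orbT.
move=> u hu'; rewrite ge_max hu // andbT; apply: H => //; exact: mem_head.
Qed.


Lemma dot_comb n (P N : cstr n.+1) (v : 'I_n -> F) :
  dot (comb P N).1 v =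
  ratr (- N.1 ord0) * dot (tailc P.1) v + ratr (P.1 ord0) * dot (tailc N.1) v.
Proof.
rewrite /dot !mulr_sumr -big_split /=; apply: eq_bigr => i _.
by rewrite !ffunE rmorphD !rmorphM /= mulrDl !mulrA.
Qed.

Lemma FM_sat n (S : seq (cstr n.+1)) (v : 'I_n -> F) :
  sat (FM S) v <-> exists x, sat S (vcons x v).
Proof.
split; last first.
  case=> x /allP hS; apply/allP => cd; rewrite mem_cat => /orP [].
    case/mapP => cd0; rewrite mem_filter => /andP [/eqP h0 /hS] + ->.
    by rewrite /satc dot_cons h0 rmorph0 mul0r add0r.
  case/allpairsP => -[P N] /= []; rewrite !mem_filter.
  case/andP => hP /hS; rewrite /satc !dot_cons => h1.
  case/andP => hN /hS; rewrite /satc !dot_cons => h2 ->.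
  rewrite dot_comb /= !rmorphD !rmorphM /=.
  rewrite -(ltr_rat F) rmorph0 in hP; rewrite -(ltr_rat F) rmorph0 in hN.
  rewrite rmorphN /=; nra.
move=> /allP hF.
set Ps := [seq cd <- S | 0 < (cd : cstr n.+1).1 ord0].
set Ns := [seq cd <- S | (cd : cstr n.+1).1 ord0 < 0].
pose bnd (cd : cstr n.+1) := (ratr cd.2 - dot (tailc cd.1) v) / ratr (cd.1 ord0).
have [x [hl hu]] : exists x, (forall l, l \in map bnd Ns -> l <= x) /\
    (forall u, u \in map bnd Ps -> x <= u).
  apply: interval => l u /mapP [N hN ->] /mapP [P hP ->].
  have : comb P N \in FM S by rewrite mem_cat; apply/orP; right; apply: allpairs_f.
  move/hF; rewrite /satc dot_comb.
  move: hP hN; rewrite !mem_filter => /andP [hP _] /andP [hN _].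
  rewrite -(ltr_rat F) rmorph0 in hP; rewrite -(ltr_rat F) rmorph0 in hN.
  rewrite /bnd /= !rmorphD !rmorphM rmorphN /=.
  set A := ratr (P.1 ord0) in hP *; set B := ratr (N.1 ord0) in hN *.
  set sP := dot _ v; set sN := dot _ v => h.
  rewrite ler_pdivlMr // mulrAC ler_ndivrMr //; nra.
exists x; apply/allP => cd hcd; rewrite /satc dot_cons.
case: (ltgtP (cd.1 ord0) 0) => h.
- have : bnd cd <= x by apply: hl; apply: map_f; rewrite mem_filter h.
  rewrite /bnd; rewrite -(ltr_rat F) rmorph0 in h.
  by rewrite ler_ndivrMr // => h'; rewrite mulrC; lra.
- have : x <= bnd cd by apply: hu; apply: map_f; rewrite mem_filter h.
  rewrite /bnd; rewrite -(ltr_rat F) rmorph0 in h.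
  by rewrite ler_pdivlMr // => h'; rewrite mulrC; lra.
- have := hF (tailc cd.1, cd.2); rewrite /satc h rmorph0 mul0r add0r; apply.
  by rewrite mem_cat map_f // mem_filter h eqxx.
Qed.


Lemma lift_max k : lift ord0 (ord_max : 'I_k.+1) = ord_max :> 'I_k.+2.
Proof. exact: val_inj. Qed.

Lemma FMn_sat k (S : seq (cstr k.+1)) (w : F) :
  sat (FMn S) (fun _ : 'I_1 => w) <-> exists v : 'I_k.+1 -> F, v ord_max = w /\ sat S v.
Proof.
elim: k S => [|k IH] S /=.
  split; first by move=> h; exists (fun _ => w).
  case=> v [hv hS]; rewrite (sat_ext S (v1 := fun _ => w) (v2 := v)) // => i.
  by rewrite (ord1 i) -hv; congr v; apply: val_inj.
rewrite IH; split.
  case=> v' [hv' /FM_sat [x hx]]; exists (vcons x v'); split=> //.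
  by rewrite /vcons -lift_max liftK.
case=> v [hv hS]; exists (fun i => v (lift ord0 i)); split; first by rewrite lift_max.
apply/FM_sat; exists (v ord0); rewrite (sat_ext S (v2 := v)) // => i.
by rewrite /vcons; case: unliftP => [j ->|->].
Qed.

End Sat.

Lemma ratr_rat (x : rat) : ratr x = x.
Proof. by rewrite /ratr divq_num_den. Qed.

Lemma sat_ratr (F : realFieldType) n (S : seq (cstr n)) (v : 'I_n -> rat) :
  sat S (fun i => ratr (v i) : F) = sat S v.
Proof.
apply: eq_all => cd; rewrite /satc /dot -(ler_rat F) rmorph_sum /=.
congr (_ <= _); first apply: eq_bigr => i _.
  by rewrite rmorphM /= ratr_rat.
by rewrite ratr_rat.
Qed.
Set Implicit Arguments.
Unset Strict Implicit.
Unset Printing Implicit Defensive.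

Section LP.
Variables (r : nat) (gens : seq 'X_{1..r}) (a : 'X_{1..r}).
Local Notation m := (size gens).
Local Notation g i := (tnth (in_tuple gens) i).
Local Notation yv i := (lift ord_max i : 'I_m.+1).

Definition mkc (cy : 'I_m -> rat) (ct : rat) : {ffun 'I_m.+1 -> rat} :=
  [ffun k => if unlift ord_max k is Some i then cy i else ct].

Definition C1 (i : 'I_m) : cstr m.+1 :=
  ([ffun k => if k == yv i then -1 else 0], 0).
Definition C2 (j : 'I_r) : cstr m.+1 := (mkc (fun i => (g i j)%:R) 0, (a j)%:R).
Definition C3 : cstr m.+1 := (mkc (fun _ => -1) 1, 0).
Definition S0 := [seq C1 i | i <- enum 'I_m] ++ [seq C2 j | j <- enum 'I_r] ++ [:: C3].

Lemma widen_lift (i : 'I_m) : widen_ord (leqnSn m) i = yv i.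
Proof. by apply: val_inj => /=; rewrite /bump leqNgt ltn_ord. Qed.

Lemma dot_mkc (F : realFieldType) cy ct (v : 'I_m.+1 -> F) :
  dot (mkc cy ct) v = \sum_i ratr (cy i) * v (yv i) + ratr ct * v ord_max.
Proof.
rewrite /dot big_ord_recr /= ffunE unlift_none; congr (_ + _).
by apply: eq_bigr => i _; rewrite ffunE widen_lift liftK.
Qed.

Lemma sat_S0 (F : realFieldType) (v : 'I_m.+1 -> F) :
  sat S0 v <-> [/\ forall i, 0 <= v (yv i),
     forall j, \sum_i (g i j)%:R * v (yv i) <= (a j)%:R &
     v ord_max <= \sum_i v (yv i)].
Proof.
rewrite /sat !all_cat !all_map /= andbT.
have e1 i : satc (C1 i) v = (0 <= v (yv i)).
  rewrite /satc /dot /= (bigD1 (yv i)) //= ffunE eqxx big1 ?addr0.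
    by rewrite rmorphN rmorph1 mulN1r rmorph0 oppr_le0.
  by move=> k /negPf hk; rewrite ffunE hk rmorph0 mul0r.
have e2 j : satc (C2 j) v = (\sum_i (g i j)%:R * v (yv i) <= (a j)%:R).
  by rewrite /satc dot_mkc /= rmorph0 mul0r addr0 ratr_nat; congr (_ <= _);
    apply: eq_bigr => i _; rewrite ratr_nat.
have e3 : satc C3 v = (v ord_max <= \sum_i v (yv i)).
  rewrite /satc dot_mkc /= rmorph1 rmorph0 mul1r.
  rewrite (eq_bigr (fun i => - v (yv i))) ?sumrN; last first.
    by move=> i _; rewrite rmorphN rmorph1 mulN1r.
  by rewrite addrC subr_le0.
rewrite e3; split.
  case/and3P => /allP h1 /allP h2 h3; split=> //.
    by move=> i; rewrite -e1; exact: (h1 i (mem_index_enum i)).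
  by move=> j; rewrite -e2; exact: (h2 j (mem_index_enum j)).
case=> h1 h2 h3; apply/and3P; split=> //; apply/allP => x _ /=.
  by rewrite e1.
by rewrite e2.
Qed.

End LP.

Lemma closure1 (F : realFieldType) (S : seq (cstr 1)) (t : F) :
  (forall e, 0 < e -> sat S (fun _ => t - e)) -> sat S (fun _ => t).
Proof.
move=> H; apply/allP => cd hcd; rewrite /satc /dot big_ord1.
apply/ler_addgt0Pr => e e0.
set c := ratr (cd.1 ord0).
case: (lerP c 0) => hc.
  have := allP (H 1 ltr01) cd hcd; rewrite /satc /dot big_ord1 -/c => h.
  nra.
have := allP (H (e / c) (divr_gt0 e0 hc)) cd hcd; rewrite /satc /dot big_ord1 -/c.
rewrite mulrBr mulrCA divff ?mulr1 ?gt_eqF //; lra.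
Qed.

Lemma rat_to_nat n (y : 'I_n -> rat) : (forall i, 0 <= y i) ->
  exists Dn (z : 'I_n -> nat), (0 < Dn)%N /\ forall i, (z i)%:R = y i * Dn%:R.
Proof.
move=> y0.
pose d i := `|denq (y i)|%N.
have d0 i : (0 < d i)%N by rewrite absz_gt0 denq_neq0.
have dE i : (d i)%:R = (denq (y i))%:~R :> rat.
  by rewrite natr_absz gtr0_norm // denq_gt0.
exists (\prod_i d i)%N, (fun i => `|numq (y i)| * \prod_(j | j != i) d j)%N; split.
  by rewrite prodn_gt0.
move=> i; rewrite [in RHS](bigD1 i) //= !natrM dE mulrA -numqE natr_absz ger0_norm //.
by rewrite numq_ge0.
Qed.


Lemma nu_le (R : realType) r (gens : seq 'X_{1..r}) (a : 'X_{1..r}) p q :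
  (q != 0)%N -> ((p%:R / q%:R : R)%:E <= nu_star R gens a)%E ->
  exists2 N, (0 < N)%N & @reach r gens (p * N) (a *+ (q * N))%MM.
Proof.
move=> q0 H.
set tq : rat := p%:R / q%:R.
have etq : ratr tq = p%:R / q%:R :> R by rewrite fmorph_div /= !ratr_nat.
set S' := FMn (S0 gens a).
have hR : sat S' (fun _ => ratr tq : R).
  apply: closure1 => e e0.
  apply/FMn_sat.
  have : ((ratr tq - e)%:E < nu_star R gens a)%E.
    by apply: lt_le_trans H; rewrite lte_fin etq ltrBlDr ltrDl.
  case/ereal_sup_gt => _ [y [hy0 hy1] <-]; rewrite lte_fin => hlt.
  exists (fun k => if unlift ord_max k is Some i then y i else ratr tq - e); split.
    by rewrite unlift_none.
  apply/sat_S0; rewrite unlift_none; split.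
  - by move=> i; rewrite liftK.
  - move=> j; rewrite (eq_bigr (fun i => (tnth (in_tuple gens) i j)%:R * y i)) //.
    by move=> i _; rewrite liftK.
  - rewrite (eq_bigr y) ?ltW // => i _; by rewrite liftK.
have hQ : sat S' (fun _ => tq) by rewrite -(sat_ratr R).
case/FMn_sat: hQ => v [vt /sat_S0 [h1 h2 h3]].
pose y i := v (lift ord_max i).
have [Dn [z [D0 hz]]] := rat_to_nat h1.
exists Dn => //; exists (fun i => q * z i)%N; split.
  rewrite -big_distrr /= -(ler_nat rat) !natrM natr_sum.
  rewrite (eq_bigr (fun i => y i * Dn%:R)) // -mulr_suml.
  have -> : (p%:R : rat) = tq * q%:R by rewrite /tq divfK // pnatr_eq0.
  have hq : (0 : rat) <= q%:R by rewrite ler0n.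
  have hD : (0 : rat) <= Dn%:R by rewrite ler0n.
  rewrite -vt; move: h3.
  change (v ord_max <= \sum_i y i -> v ord_max * q%:R * Dn%:R <= q%:R * ((\sum_i y i) * Dn%:R)).
  have hqD : (0:rat) <= q%:R * Dn%:R by rewrite mulr_ge0.
  nra.
move=> j; rewrite mulmnE -(ler_nat rat) natr_sum !natrM.
rewrite (eq_bigr (fun i => q%:R * Dn%:R * ((tnth (in_tuple gens) i j)%:R * y i))); last first.
  by move=> i _; rewrite !natrM hz /y; ring.
rewrite -mulr_sumr mulrC ler_wpM2r //.
Qed.

Unset Implicit Arguments.

Theorem lemma2p1 (k : fieldType) (r : nat) (R : realType)
    (I : {mpoly k[r]} -> Prop) (gens : seq 'X_{1..r})
    (a : 'X_{1..r}) (p q : nat) :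
  is_min_monomial_gens I gens -> (q != 0)%N ->
  (rational_power I p q 'X_[a] <->
   ((p%:R / q%:R : R)%:E <= nu_star R gens a)%E).
Proof.
case=> hI _ _ q0; rewrite (@rp_iff k r gens I hI); split.
  by case=> N N0 h; apply: nu_ge N0 q0 h.
by move=> h; apply: nu_le q0 h.
Qed.
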